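(* Let $(V,\langle\cdot,\cdot\rangle)$ be a pseudo-Euclidean real vector space of signature $(k,l)$ with $k\ge2$, $l\ge2$, let $Z\subseteq V$ be a subspace with $q^+(Z)\ge1$, and let $H\subseteq V$ be a positive $(k-1)$-plane, so that $V=H\oplus H^\perp$ with $H^\perp$ Minkowski of signature $(1,l)$. Let $\pi^{H^\perp}:V\to H^\perp$ be the projection along $H$, and let $C^+(H^\perp)$ be either one of the two connected components of $\{w\in H^\perp:\langle w,w\rangle\ge0\}\setminus\{0\}$. The following are equivalent: (i) $H$ is $Z$-orthogonally-extendable; (ii) $q^+(Z\cap H^\perp)\ge1$; (iii) $\pi^{H^\perp}(Z^\perp)\cap C^+(H^\perp)=\emptyset$.
   Context: A pseudo-Euclidean space of signature $(k,l)$ is a finite-dimensional real vector space with a symmetric non-degenerate bilinear form whose Sylvester diagonal form has $k$ entries $+1$ and $l$ entries $-1$. For a subspace $L$, $q^+(L)$ denotes the number of $+1$'s in a diagonalization of the restriction of the form to $L$, and $L^\perp$ is the orthogonal complement in $V$. A positive $r$-plane is an $r$-dimensional subspace on which the form is positive definite. $H$ is $Z$-orthogonally-extendable if there is $z\in Z\cap H^\perp$ with $H+\mathbb{R}z$ a positive $k$-plane. *)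

(* Defs.v *)
From HB Require Import structures.
From mathcomp Require Import all_boot all_order all_algebra.
Set Implicit Arguments. Unset Strict Implicit. Unset Printing Implicit Defensive.
Import Order.TTheory GRing.Theory Num.Theory.
Local Open Scope ring_scope.

Section Defs.
Variable R : realFieldType.

(* Dedekind/sup completeness: together with realFieldType this pins R down
   as (an isomorphic copy of) the real numbers. *)
Definition sup_complete : Prop :=
  forall A : R -> Prop, (exists x, A x) -> (exists M, forall x, A x -> x <= M) ->
  exists s, (forall x, A x -> x <= s) /\
            (forall M, (forall x, A x -> x <= M) -> s <= M).

Variable n : nat.
Definition bform (B : 'M[R]_n) (u v : 'rV[R]_n) : R := (u *m B *m v^T) 0 0.

Definition sylvester_diag r (D : 'M[R]_r) (p q : nat) : Prop :=
  is_diag_mx D /\ (forall i, D i i = 1 \/ D i i = -1 \/ D i i = 0) /\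
  #|[set i | D i i == 1]| = p /\ #|[set i | D i i == -1]| = q.

(* The restriction of the form to the subspace (row space of) L has a
   Sylvester diagonalization with p entries +1 and q entries -1:
   P is a basis of L (rows of P), and P B P^T is the Gram matrix. *)
Definition sylvester_form (B : 'M[R]_n) m (L : 'M[R]_(m, n)) (p q : nat) : Prop :=
  exists P : 'M[R]_(\rank L, n), (P == L)%MS /\ sylvester_diag (P *m B *m P^T) p q.

Definition qplus_is (B : 'M[R]_n) m (L : 'M[R]_(m, n)) (p : nat) : Prop :=
  exists q, sylvester_form B L p q.

Definition qplus_ge1 (B : 'M[R]_n) m (L : 'M[R]_(m, n)) : Prop :=
  exists p, qplus_is B L p /\ (1 <= p)%N.

Definition pseudo_euclidean (B : 'M[R]_n) (k l : nat) : Prop :=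
  B^T = B /\ B \in unitmx /\ sylvester_form B (1%:M : 'M[R]_n) k l.

Definition perp (B : 'M[R]_n) m (L : 'M[R]_(m, n)) : 'M[R]_n := kermx (B *m L^T).

Definition positive_plane (B : 'M[R]_n) m (L : 'M[R]_(m, n)) (r : nat) : Prop :=
  \rank L = r /\ forall u : 'rV[R]_n, (u <= L)%MS -> u != 0 -> 0 < bform B u u.

Definition orth_extendable (B : 'M[R]_n) (k : nat) (Z H : 'M[R]_n) : Prop :=
  exists z : 'rV[R]_n, (z <= Z :&: perp B H)%MS /\ positive_plane B (H + z)%MS k.

Definition lightcone (B : 'M[R]_n) (W : 'M[R]_n) : 'rV[R]_n -> Prop :=
  fun w => (w <= W)%MS /\ 0 <= bform B w w /\ w != 0.

Definition open_set (U : 'rV[R]_n -> Prop) : Prop :=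
  forall x, U x -> exists2 e : R, 0 < e &
    forall y : 'rV[R]_n, (forall i, `|y 0 i - x 0 i| < e) -> U y.

Definition connected_set (S : 'rV[R]_n -> Prop) : Prop :=
  forall U1 U2, open_set U1 -> open_set U2 ->
    (forall x, S x -> U1 x \/ U2 x) ->
    (forall x, ~ (S x /\ U1 x /\ U2 x)) ->
    (exists x, S x /\ U1 x) -> (exists x, S x /\ U2 x) -> False.

Definition connected_component (S C : 'rV[R]_n -> Prop) : Prop :=
  (exists x, C x) /\ (forall x, C x -> S x) /\ connected_set C /\
  (forall D, connected_set D -> (forall x, D x -> S x) ->
     (exists x, D x /\ C x) -> forall x, D x -> C x).

End Defs.

(* Main.v *)
Require Import Defs.
From HB Require Import structures.
From mathcomp Require Import all_boot all_order all_algebra.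
From mathcomp Require Import ring lra zify.
From Stdlib Require Import Classical.
Import Order.TTheory GRing.Theory Num.Theory.
Local Open Scope ring_scope.
Set Implicit Arguments. Unset Strict Implicit. Unset Printing Implicit Defensive.

Section Sqrt.
Variable R : realFieldType.
Hypothesis hR : sup_complete R.

Lemma sqrt_ex (x : R) : 0 <= x -> exists r, 0 <= r /\ r * r = x.
Proof.
move=> x0.
have [s [hs1 hs2]] : exists s, (forall y, 0 <= y /\ y * y <= x -> y <= s) /\
   (forall M, (forall y, 0 <= y /\ y * y <= x -> y <= M) -> s <= M).
  apply: hR; first by exists 0; split => //; rewrite mulr0.
  exists (x + 1) => y [y0 yy].
  rewrite leNgt; apply/negP => hy.
  have : (x + 1) * (x + 1) < y * y by apply: ltr_pM => //; lra.
  nra.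
have s0 : 0 <= s by apply: hs1; split => //; rewrite mulr0.
exists s; split => //.
case: (ltgtP (s * s) x) => // h.
-
  pose d := Num.min 1 ((x - s * s) / (2 * s + 1)).
  have d0 : 0 < d.
    rewrite lt_min ltr01 /=; apply: divr_gt0; lra.
  have d1 : d <= 1 by rewrite ge_min lexx.
  have d2 : d * (2 * s + 1) <= x - s * s.
    have : d <= (x - s * s) / (2 * s + 1) by rewrite ge_min lexx orbT.
    rewrite ler_pdivlMr; last by lra.
    done.
  have : s + d <= s.
    apply: hs1; split; first lra.
    nra.
  lra.
-
  have sp : 0 < s.
    rewrite lt0r s0 andbT; apply/eqP => s00; move: h; rewrite s00 mulr0; lra.
  pose d := (s * s - x) / (2 * s).
  have d0 : 0 < d by apply: divr_gt0; lra.
  have dd : d * (2 * s) = s * s - x by rewrite /d mulfVK //; lra.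
  have : s <= s - d.
    apply: hs2 => y [y0 yy].
    rewrite leNgt; apply/negP => hy.
    have hsd : 0 <= s - d by nra.
    have : (s - d) * (s - d) < y * y by apply: ltr_pM.
    nra.
  lra.
Qed.
End Sqrt.

Section Bform.
Variable R : realFieldType.
Variable n : nat.
Variable B : 'M[R]_n.
Hypothesis Bsym : B^T = B.

Local Notation bf := (bform B).

Lemma bformDl u v w : bf (u + v) w = bf u w + bf v w.
Proof. by rewrite /bform !mulmxDl mxE. Qed.
Lemma bformDr u v w : bf w (u + v) = bf w u + bf w v.
Proof. by rewrite /bform linearD /= mulmxDr mxE. Qed.
Lemma bformZl a u w : bf (a *: u) w = a * bf u w.
Proof. by rewrite /bform -!scalemxAl mxE. Qed.
Lemma bformZr a u w : bf w (a *: u) = a * bf w u.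
Proof. by rewrite /bform linearZ /= -scalemxAr mxE. Qed.
Lemma bformNl u w : bf (- u) w = - bf u w.
Proof. by rewrite -scaleN1r bformZl mulN1r. Qed.
Lemma bformNr u w : bf w (- u) = - bf w u.
Proof. by rewrite -scaleN1r bformZr mulN1r. Qed.
Lemma bformBl u v w : bf (u - v) w = bf u w - bf v w.
Proof. by rewrite bformDl bformNl. Qed.
Lemma bformBr u v w : bf w (u - v) = bf w u - bf w v.
Proof. by rewrite bformDr bformNr. Qed.
Lemma bform0l w : bf 0 w = 0.
Proof. by rewrite /bform !mul0mx mxE. Qed.
Lemma bform0r w : bf w 0 = 0.
Proof. by rewrite /bform trmx0 mulmx0 mxE. Qed.
Lemma bform_sym u v : bf u v = bf v u.
Proof.
have e : (v *m B *m u^T)^T = u *m B *m v^T by rewrite !trmx_mul trmxK Bsym mulmxA.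
by rewrite /bform -e mxE.
Qed.

Lemma bform_sub_perp m (L : 'M_(m, n)) u v :
  (u <= perp B L)%MS -> (v <= L)%MS -> bf u v = 0.
Proof.
rewrite /perp sub_kermx => /eqP h /submxP [x ->].
by rewrite /bform trmx_mul !mulmxA -(mulmxA u) h mul0mx mxE.
Qed.

Lemma perp_subP m (L : 'M_(m, n)) u :
  (u <= perp B L)%MS <-> (forall v, (v <= L)%MS -> bf u v = 0).
Proof.
split; first by move=> h v; exact: bform_sub_perp.
move=> h; rewrite /perp sub_kermx; apply/eqP/matrixP => i j.
rewrite ord1 [RHS]mxE -(h (row j L) (row_sub _ _)) bform_sym /bform.
transitivity ((u *m (B *m L^T))^T j 0); first by rewrite [RHS]mxE.
by rewrite !trmx_mul trmxK Bsym -!row_mul [RHS]mxE.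
Qed.

Lemma perp_sym m (L : 'M_(m, n)) u v :
  (u <= L)%MS -> (v <= perp B L)%MS -> bf u v = 0.
Proof. by move=> hu hv; rewrite bform_sym; exact: bform_sub_perp hv hu. Qed.

Definition posdef m (U : 'M[R]_(m, n)) :=
  forall u, (u <= U)%MS -> u != 0 -> 0 < bf u u.

Lemma posdef_eqmx m1 m2 (U : 'M_(m1, n)) (V : 'M_(m2, n)) :
  (U :=: V)%MS -> posdef U -> posdef V.
Proof. by move=> e h u; rewrite -e; exact: h. Qed.

Lemma posdef_sub m1 m2 (U : 'M_(m1, n)) (V : 'M_(m2, n)) :
  (U <= V)%MS -> posdef V -> posdef U.
Proof. by move=> e h u hu; apply: h; exact: submx_trans e. Qed.

Lemma sub_rV (z u : 'rV[R]_n) : (u <= z)%MS -> exists a, u = a *: z.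
Proof.
case/submxP => x ->; exists (x 0 0).
by rewrite [x]mx11_scalar mul_scalar_mx mxE eqxx mulr1n.
Qed.

Lemma posdef_rV (z : 'rV[R]_n) : 0 < bf z z -> posdef z.
Proof.
move=> hz u /sub_rV [a ->] hu.
rewrite bformZl bformZr mulrA; apply: mulr_gt0 => //.
have a0 : a != 0 by apply: contraNneq hu => ->; rewrite scale0r.
by rewrite -expr2 exprn_even_gt0.
Qed.

Lemma cap0_of m1 m2 (X : 'M_(m1, n)) (Y : 'M_(m2, n)) :
  (forall u : 'rV[R]_n, (u <= X)%MS -> (u <= Y)%MS -> u = 0) -> (X :&: Y)%MS = 0 :> 'M[R]_n.
Proof.
move=> h; apply/eqP/rowV0P => v; rewrite sub_capmx => /andP [a b]; exact: h.
Qed.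

Lemma posdef_orth_sum m1 m2 (X : 'M_(m1, n)) (Y : 'M_(m2, n)) :
  posdef X -> posdef Y ->
  (forall x y, (x <= X)%MS -> (y <= Y)%MS -> bf x y = 0) ->
  posdef (X + Y)%MS /\ \rank (X + Y)%MS = (\rank X + \rank Y)%N.
Proof.
move=> hX hY ho; split.
  move=> u /sub_addsmxP [[a b]] /= -> hu.
  have hx : (a *m X <= X)%MS by apply: submxMl.
  have hy : (b *m Y <= Y)%MS by apply: submxMl.
  move: hu hx hy; move: (a *m X) (b *m Y) => x y hu hx hy.
  rewrite bformDl !bformDr (ho _ _ hx hy) (bform_sym y x) (ho _ _ hx hy) add0r addr0.
  have [x0|x0] := eqVneq x 0.
    subst x; rewrite bform0l add0r; apply: hY => //; by rewrite add0r in hu.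
  have [y0|y0] := eqVneq y 0.
    subst y; rewrite bform0l addr0; exact: hX.
  by apply: addr_gt0; [exact: hX | exact: hY].
apply: mxrank_disjoint_sum; apply: cap0_of => u hx hy.
apply/eqP; apply: contraT => u0.
have := hX u hx u0; by rewrite (ho _ _ hx hy) ltxx.
Qed.

End Bform.

Section Diag.
Variable R : realFieldType.
Hypothesis hR : sup_complete R.
Variable n : nat.
Variable B : 'M[R]_n.
Hypothesis Bsym : B^T = B.

Local Notation bf := (bform B).
Local Notation bsym := (bform_sym Bsym).

Lemma mxBE m1 m2 (X : 'M_(m1, n)) (Y : 'M_(m2, n)) i j :
  (X *m B *m Y^T) i j = bf (row i X) (row j Y).
Proof. by rewrite /bform tr_row colE !mulmxA -!row_mul -colE !mxE. Qed.

Lemma shrink r m (X : 'M[R]_(m, n)) : (\rank X <= r)%N ->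
  exists X' : 'M_(r, n), (X' == X)%MS.
Proof.
move=> h.
exists (castmx (subnKC h, erefl n) (col_mx (row_base X) (0 : 'M_(r - \rank X, n)))).
apply/eqmxP; apply: eqmx_trans (eqmx_cast _ _) _.
apply: eqmx_trans (eqmx_sym (addsmxE _ _)) _.
apply: eqmx_trans (addsmx0 _ _) _.
exact: eq_row_base.
Qed.

Definition sdiag m (d : 'rV[R]_m) := forall i, d 0 i = 1 \/ d 0 i = -1 \/ d 0 i = 0.

Lemma sdiag_row m1 m2 (a : 'rV[R]_m1) (b : 'rV[R]_m2) :
  sdiag a -> sdiag b -> sdiag (row_mx a b).
Proof.
move=> ha hb i; case: (splitP i) => j hj.
  have -> : i = lshift m2 j by apply: ord_inj.
  by rewrite row_mxEl.
have -> : i = rshift m1 j by apply: ord_inj.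
by rewrite row_mxEr.
Qed.

Lemma diag_ex m (A : 'M[R]_(m, n)) : exists Q : 'M_(m, n), (Q == A)%MS /\
  exists d : 'rV_m, Q *m B *m Q^T = diag_mx d /\ sdiag d.
Proof.
elim: m A => [|m IH] A.
  exists A; split; first by apply/eqmxP.
  exists 0; split; first by apply/matrixP => [[]].
  by case.
case: (classic (exists u, (u <= A)%MS /\ bf u u != 0)) => hex; last first.
  have h0 : forall u : 'rV_n, (u <= A)%MS -> bf u u = 0.
    move=> u hu; apply/eqP; apply: contraT => hn; case: hex; by exists u.
  have h1 : forall u v : 'rV_n, (u <= A)%MS -> (v <= A)%MS -> bf u v = 0.
    move=> u v hu hv.
    have huv : ((u + v)%R <= A)%MS by apply: addmx_sub.
    have := h0 _ huv; rewrite bformDl !bformDr (h0 _ hu) (h0 _ hv) (bsym v u).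
    rewrite add0r addr0 -mulr2n => /eqP; rewrite mulrn_eq0 /= => /eqP //.
  exists A; split; first by apply/eqmxP.
  exists 0; split; last by move=> i; rewrite mxE; right; right.
  apply/matrixP => i j; rewrite mxBE h1 ?row_sub // linear0 mxE //.
case: hex => u0 [hu0 hn0].
have [t [t0 tt]] := sqrt_ex hR (normr_ge0 (bf u0 u0)).
have tp : 0 < t.
  rewrite lt0r t0 andbT; apply/eqP => t00; move: tt; rewrite t00 mulr0 => /esym/eqP.
  by rewrite normr_eq0 (negbTE hn0).
pose u := t^-1 *: u0.
pose s := bf u u.
have hs : s = 1 \/ s = -1.
  rewrite /s /u bformZl bformZr mulrA -invfM tt.
  case: (ltrgtP 0 (bf u0 u0)) => h.
  - left; rewrite gtr0_norm // mulVf //.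
  - right; rewrite ltr0_norm // invrN mulNr mulVf //.
  - by move: hn0; rewrite -h eqxx.
have s0 : s != 0 by case: hs => ->; rewrite ?oppr_eq0 oner_eq0.
have hu : (u <= A)%MS by apply: scalemx_sub.
have unz : u != 0.
  apply/eqP => h; move: s0; rewrite /s h bform0l eqxx //.
pose Mc := (A *m B *m u^T) *m (s^-1 *: u).
pose A1 := A - Mc.
have uu : u *m B *m u^T = s%:M by rewrite [LHS]mx11_scalar.
have A1u : A1 *m B *m u^T = 0.
  rewrite /A1 /Mc !mulmxBl -!mulmxA -scalemxAl.
  by rewrite (mulmxA u B) uu scale_scalar_mx mulVf // mulmx1 subrr.
set c := u *m pinvmx A.
have cA : c *m A = u by rewrite mulmxKpV.
have cA1 : c *m A1 = 0.
  rewrite /A1 /Mc mulmxBr !mulmxA cA uu mul_scalar_mx scalerA mulfV // scale1r subrr //.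
have cnz : c != 0 by apply: contraNneq unz => c0; rewrite -cA c0 mul0mx.
have rk : (\rank A1 <= m)%N.
  have : (c <= kermx A1)%MS by rewrite sub_kermx cA1.
  move/mxrankS; rewrite mxrank_ker rank_rV cnz.
  have := rank_leq_row A1; lia.
have [A' hA'] := shrink rk.
have [Q' [hQ' [d' [hd' sd']]]] := IH A'.
have Q'A1 : (Q' <= A1)%MS by rewrite (eqmxP hQ') (eqmxP hA').
have Q'u : Q' *m B *m u^T = 0.
  case/submxP: Q'A1 => D ->; by rewrite -!mulmxA !(mulmxA A1) A1u mulmx0.
have uQ' : u *m B *m Q'^T = 0.
  by have := congr1 trmx Q'u; rewrite !trmx_mul !trmxK Bsym trmx0 mulmxA.
have Mcu : (Mc <= u)%MS.
  by apply: submx_trans (submxMl _ _) _; apply: scalemx_sub.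
have A1A : (A1 <= A)%MS.
  by apply: addmx_sub => //; rewrite eqmx_opp; exact: submx_trans Mcu hu.
have A1Q : (A1 <= Q')%MS by rewrite (eqmxP hQ') (eqmxP hA').
exists (col_mx u Q'); split.
  apply/eqmxP; apply: eqmx_trans (eqmx_sym (addsmxE u Q')) _; apply/eqmxP; apply/andP; split.
    rewrite addsmx_sub hu /=; exact: submx_trans Q'A1 A1A.
  have -> : A = A1 + Mc by rewrite /A1 subrK.
  rewrite addsmxC; exact: addmx_sub_adds A1Q Mcu.
exists (row_mx (s%:M : 'rV_1) d'); split.
  change (@mulmx _ (1 + m) n (1 + m) (col_mx u Q' *m B) (col_mx u Q')^T = @diag_mx _ (1 + m) (row_mx (s%:M : 'rV_1) d')).
  rewrite diag_mx_row mul_col_mx tr_col_mx mul_col_row uu uQ' Q'u hd'.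
  congr block_mx; apply/matrixP => i j; rewrite !ord1 !mxE //.
apply: (@sdiag_row 1 m) => // i; rewrite ord1 mxE /=.
by case: hs => ->; [left | right; left].
Qed.

Lemma diag_quad m (x : 'rV[R]_m) (d : 'rV[R]_m) :
  (x *m diag_mx d *m x^T) 0 0 = \sum_j x 0 j * d 0 j * x 0 j.
Proof. by rewrite mul_mx_diag mxE; apply: eq_bigr => j _; rewrite !mxE. Qed.

Lemma qplus_of_pos p (L : 'M[R]_(p, n)) z :
  (z <= L)%MS -> 0 < bf z z -> qplus_ge1 B L.
Proof.
move=> hz hzz.
have [Q [hQ [d [hd sd]]]] := diag_ex (row_base L).
have QL : (Q == L)%MS by apply/eqmxP; apply: eqmx_trans (eqmxP hQ) (eq_row_base L).
have [i di] : exists i, d 0 i = 1.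
  apply: NNPP => hno.
  have zQ : (z <= Q)%MS by rewrite (eqmxP QL).
  case/submxP: zQ => x zx.
  move: hzz; rewrite zx /bform trmx_mul !mulmxA -(mulmxA x Q) -(mulmxA x) hd.
  rewrite diag_quad => hpos.
  have : \sum_j x 0 j * d 0 j * x 0 j <= \sum_(j < \rank L) (0:R).
    apply: ler_sum => j _.
    have : d 0 j <> 1 by move=> h; apply: hno; exists j.
    case: (sd j) => [-> //|[-> _|-> _]]; last by rewrite mulr0 mul0r.
    by rewrite mulrN1 mulNr oppr_le0 -expr2 sqr_ge0.
  by rewrite big1_eq leNgt hpos.
exists #|[set j | (Q *m B *m Q^T) j j == 1]|; split; last first.
  by apply/card_gt0P; exists i; rewrite inE hd mxE eqxx mulr1n di.
exists #|[set j | (Q *m B *m Q^T) j j == -1]|; exists Q; split => //.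
split; first by rewrite hd diag_mx_is_diag.
split => //; move=> j; rewrite hd mxE eqxx mulr1n; exact: sd.
Qed.

Lemma pos_of_qplus p (L : 'M[R]_(p, n)) :
  qplus_ge1 B L -> exists z, (z <= L)%MS /\ 0 < bf z z.
Proof.
case=> p0 [[q [P [hP [_ [_ [hc _]]]]]] hp0].
move: hp0; rewrite -hc => /card_gt0P [i]; rewrite inE => /eqP hi.
exists (row i P); split; first by rewrite -(eqmxP hP) row_sub.
by rewrite -mxBE hi ltr01.
Qed.
End Diag.

Section Bound.
Variable R : realFieldType.
Variables n k l : nat.
Variable B : 'M[R]_n.
Hypothesis hB : pseudo_euclidean B k l.

Local Notation bf := (bform B).

Lemma posdef_rank_le m (U : 'M[R]_(m, n)) : posdef B U -> (\rank U <= k)%N.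
Proof.
move=> hU.
case: hB => Bsym [Bu [P [hP [Ddiag [Dent [Dk _]]]]]].
move: Ddiag Dent Dk; set D := P *m B *m P^T => Ddiag Dent Dk.
case/diag_mxP: Ddiag => d Dd.
set S := [set i | D i i == 1].
pose Sel := \matrix_(i < \rank (1%:M : 'M[R]_n), j < #|S|) ((i == enum_val j)%:R : R).
pose F := pinvmx P *m Sel.
have key : forall u : 'rV_n, (u <= U)%MS -> (u <= kermx F)%MS -> u = 0.
  move=> u hu; rewrite sub_kermx => /eqP hF; apply/eqP; apply: contraT => u0.
  have := hU u hu u0.
  have uP : (u <= P)%MS by rewrite (eqmxP hP) submx1.
  set c := u *m pinvmx P.
  have cP : c *m P = u by rewrite mulmxKpV.
  have cS : forall i, i \in S -> c 0 i = 0.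
    move=> i iS; have := congr1 (fun M : 'M[R]_(1, #|S|) => M 0 (enum_rank_in iS i)) hF.
    rewrite /= /F mulmxA -/c mxE (bigD1 i) //= big1 ?addr0.
      by rewrite !mxE enum_rankK_in // eqxx mulr1.
    by move=> j ji; rewrite /Sel [X in _ * X = _]mxE (enum_rankK_in iS iS) (negbTE ji) mulr0.
  rewrite -cP /bform trmx_mul !mulmxA -(mulmxA c P) -(mulmxA c) -/D Dd diag_quad.
  have : \sum_j c 0 j * d 0 j * c 0 j <= \sum_(j < \rank (1%:M : 'M[R]_n)) (0:R).
    apply: ler_sum => j _.
    case: (boolP (j \in S)) => jS; first by rewrite cS // !mul0r.
    have dj : d 0 j = D j j by rewrite Dd mxE eqxx mulr1n.
    have jn : D j j != 1 by move: jS; rewrite inE.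
    rewrite dj; case: (Dent j) => [h|[h|h]]; rewrite h.
    - by rewrite h eqxx in jn.
    - by rewrite mulrN1 mulNr oppr_le0 -expr2 sqr_ge0.
    - by rewrite mulr0 mul0r.
  by rewrite big1_eq leNgt => /negbTE ->.
have cap0 := cap0_of key.
have := mxrank_mul_ker U F; rewrite cap0 mxrank0 addn0 => <-.
by rewrite -Dk; apply: rank_leq_col.
Qed.

End Bound.

Section Geom.
Variable R : realFieldType.
Variables n k l : nat.
Variable B : 'M[R]_n.
Hypothesis hB : pseudo_euclidean B k l.
Hypothesis hk : (2 <= k)%N.
Variable H : 'M[R]_n.
Hypothesis hH : positive_plane B H k.-1.

Local Notation bf := (bform B).
Let Bsym : B^T = B. Proof. by case: hB. Qed.
Let Bu : B \in unitmx. Proof. by case: hB => _ []. Qed.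
Local Notation bsym := (bform_sym Bsym).
Local Notation W := (perp B H).

Lemma Hpd : posdef B H.
Proof. by case: hH. Qed.

Lemma WH0 : (W :&: H)%MS = 0 :> 'M[R]_n.
Proof.
apply: cap0_of => u hW hH'; apply/eqP; apply: contraT => u0.
by have := Hpd hH' u0; rewrite (bform_sub_perp hW hH') ltxx.
Qed.

Lemma rankW : \rank W = (n - \rank H)%N.
Proof.
rewrite /perp mxrank_ker -mxrank_tr trmx_mul trmxK Bsym mxrankMfree //.
by rewrite row_free_unit.
Qed.

Lemma WH_full : row_full (W + H)%MS.
Proof.
rewrite /row_full mxrank_disjoint_sum ?WH0 // rankW subnK //.
exact: rank_leq_col.
Qed.

Definition piW (v : 'rV[R]_n) := v *m proj_mx W H.

Lemma piW_sub v : (piW v <= W)%MS.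
Proof. exact: proj_mx_sub. Qed.

Lemma piW_compl v : (v - piW v <= H)%MS.
Proof. by apply: proj_mx_compl_sub; apply: submx_full; exact: WH_full. Qed.

Lemma piW_id v : (v <= W)%MS -> piW v = v.
Proof. by move=> h; apply: proj_mx_id => //; exact: WH0. Qed.

Lemma piW_H v : (v <= H)%MS -> piW v = 0.
Proof. by move=> h; apply: proj_mx_0 => //; exact: WH0. Qed.

Lemma W_nondeg w : (w <= W)%MS -> w != 0 -> exists y, (y <= W)%MS /\ bf w y != 0.
Proof.
move=> hw w0.
have wB : w *m B != 0.
  apply: contraNneq w0 => h; by rewrite -(mulmxK Bu w) h mul0mx.
have [j hj] : exists j, (w *m B) 0 j != 0.
  apply: NNPP => hn; move/negP: wB; apply; apply/eqP/matrixP => i j.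
  rewrite ord1 [RHS]mxE; apply: NNPP => hj; apply: hn; exists j; by apply/eqP.
pose y0 : 'rV[R]_n := delta_mx 0 j.
have e0 : bf w y0 = (w *m B) 0 j.
  by rewrite /bform /y0 trmx_delta -colE mxE.
exists (piW y0); split; first exact: piW_sub.
have : bf w (y0 - piW y0) = 0 by apply: bform_sub_perp hw (piW_compl y0).
by rewrite bformBr e0 => /eqP; rewrite subr_eq0 => /eqP <-.
Qed.

(* rank of positive definite subspace bounded *)
Lemma pos_two_false z w : (z <= W)%MS -> (w <= W)%MS -> 0 < bf z z -> 0 < bf w w ->
  bf z w = 0 -> False.
Proof.
move=> hz hw zz ww zw.
have z0 : z != 0 by apply: contraTneq zz => ->; rewrite bform0l ltxx.
have w0 : w != 0 by apply: contraTneq ww => ->; rewrite bform0l ltxx.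
have [pd1 rk1] := posdef_orth_sum Bsym Hpd (posdef_rV zz)
   (fun x y hx hy => perp_sym Bsym hx (submx_trans hy hz)).
have orth2 : forall x y, (x <= H + z)%MS -> (y <= w)%MS -> bf x y = 0.
  move=> x y /sub_addsmxP [[a b]] /= -> /sub_rV [c ->].
  rewrite bformDl bformZr (perp_sym Bsym (submxMl _ _) hw) mulr0 add0r.
  by rewrite [b]mx11_scalar mul_scalar_mx bformZl bformZr zw !mulr0.
have [pd2 rk2] := posdef_orth_sum Bsym pd1 (posdef_rV ww) orth2.
have := posdef_rank_le hB pd2.
rewrite rk2 rk1 !rank_rV z0 w0 (proj1 hH).
move: hk; lia.
Qed.

Lemma perturb w y : bf w w = 0 -> bf w y != 0 ->
  exists t, 0 < bf (w + t *: y) (w + t *: y).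
Proof.
move=> ww wy.
set b := bf w y; set c := bf y y.
pose s := (1 + `|c|)^-1.
have s0 : 0 < s by rewrite invr_gt0; have := normr_ge0 c; lra.
have s1 : s * (1 + `|c|) = 1 by rewrite mulVf //; have := normr_ge0 c; lra.
have cn : - `|c| <= c by rewrite lerNnormlW.
have b2 : 0 < b * b by rewrite -expr2 exprn_even_gt0.
exists (s * b).
rewrite !bformDl !bformDr !bformZl !bformZr ww (bsym y w) -/b -/c add0r.
have sc : 0 <= s * `|c| by apply: mulr_ge0; [lra|exact: normr_ge0].
have h2 : 0 < 2 + s * c by nra.
have -> : s * b * b + (s * b * b + s * b * (s * b * c)) = (s * (b * b)) * (2 + s * c) by ring.
by apply: mulr_gt0 => //; apply: mulr_gt0.
Qed.

Lemma pos_in_W w : (w <= W)%MS -> w != 0 -> 0 <= bf w w ->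
  exists e, (e <= W)%MS /\ 0 < bf e e.
Proof.
move=> hw w0 ww.
case: (ltrgtP 0 (bf w w)) => h; first by exists w.
  by move: ww; rewrite leNgt h.
have [y [hy wy]] := W_nondeg hw w0.
have [t ht] := perturb (esym h) wy.
exists (w + t *: y); split => //.
by apply: addmx_sub => //; apply: scalemx_sub.
Qed.

Lemma orth_cone_false z w : (z <= W)%MS -> (w <= W)%MS -> 0 < bf z z ->
  bf z w = 0 -> 0 <= bf w w -> w != 0 -> False.
Proof.
move=> hz hw zz zw ww w0.
case: (ltrgtP 0 (bf w w)) => h.
- exact: pos_two_false hz hw zz h zw.
- by move: ww; rewrite leNgt h.
have [y [hy wy]] := W_nondeg hw w0.
pose y' := y - (bf y z / bf z z) *: z.
have zz0 : bf z z != 0 by rewrite gt_eqF.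
have wy' : bf w y' = bf w y.
  by rewrite /y' bformBr bformZr (bsym w z) zw mulr0 subr0.
have zy' : bf z y' = 0.
  by rewrite /y' bformBr bformZr (bsym z y) mulfVK // subrr.
rewrite -wy' in wy.
have [t ht] := perturb (esym h) wy.
apply: (pos_two_false hz _ zz ht).
  apply: addmx_sub => //; apply: scalemx_sub; apply: addmx_sub => //.
  by rewrite eqmx_opp; apply: scalemx_sub.
by rewrite bformDr bformZr zw zy' mulr0 addr0.
Qed.

End Geom.

Section Conn.
Variable R : realFieldType.
Hypothesis hR : sup_complete R.
Variable n : nat.

Definition seg (a b : 'rV[R]_n) (t : R) := (1 - t) *: a + t *: b.

Lemma seg_near (a b : 'rV[R]_n) (U : 'rV[R]_n -> Prop) s :
  open_set U -> U (seg a b s) -> exists2 d : R, 0 < d &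
    forall t, `|t - s| < d -> U (seg a b t).
Proof.
move=> hU /hU [e e0 he].
pose K := 1 + \sum_i `|b 0 i - a 0 i|.
have K0 : 0 < K by rewrite /K ltr_wpDr // sumr_ge0 // => i _; exact: normr_ge0.
have Ki : forall i, `|b 0 i - a 0 i| <= K.
  move=> i; rewrite /K (bigD1 i) //= addrA ler_wpDr //.
    by apply: sumr_ge0 => j _; exact: normr_ge0.
  by rewrite ler_wpDl.
exists (e / K); first exact: divr_gt0.
move=> t ht; apply: he => i.
have -> : seg a b t 0 i - seg a b s 0 i = (t - s) * (b 0 i - a 0 i).
  by rewrite /seg !mxE; ring.
rewrite normrM.
have := Ki i; have := normr_ge0 (t - s); have := normr_ge0 (b 0 i - a 0 i).
move: ht; rewrite ltr_pdivlMr // => ht.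
nra.
Qed.

Lemma segment_conn (a b : 'rV[R]_n) (S U1 U2 : 'rV[R]_n -> Prop) :
  open_set U1 -> open_set U2 -> (forall x, S x -> U1 x \/ U2 x) ->
  (forall x, ~ (S x /\ U1 x /\ U2 x)) ->
  (forall t, 0 <= t <= 1 -> S (seg a b t)) -> U1 a -> U2 b -> False.
Proof.
move=> o1 o2 cov dis hS Ua Ub.
have f0 : seg a b 0 = a by rewrite /seg subr0 scale1r scale0r addr0.
have f1 : seg a b 1 = b by rewrite /seg subrr scale0r scale1r add0r.
pose A := fun t => 0 <= t <= 1 /\ forall s, 0 <= s <= t -> U1 (seg a b s).
have A0 : A 0.
  split; first by rewrite lexx ler01.
  move=> s /andP [h1 h2]; have -> : s = 0 by apply/eqP; rewrite eq_le h1 h2.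
  by rewrite f0.
have [sg [hs1 hs2]] : exists sg, (forall t, A t -> t <= sg) /\
   (forall M, (forall t, A t -> t <= M) -> sg <= M).
  apply: hR; first by exists 0.
  by exists 1 => t [/andP [_ ->]].
have sg0 : 0 <= sg by apply: hs1.
have sg1 : sg <= 1 by apply: hs2 => t [/andP [_ ->]].
have below : forall s, s < sg -> exists t, A t /\ s < t.
  move=> s hs; apply: NNPP => hn.
  have : sg <= s.
    apply: hs2 => t At; rewrite leNgt; apply/negP => st; apply: hn; by exists t.
  lra.
have Ssg : S (seg a b sg) by apply: hS; rewrite sg0 sg1.
case: (cov _ Ssg) => hU.
- have sglt : sg < 1.
    rewrite lt_neqAle sg1 andbT; apply/eqP => e; apply: (dis b).
    split; first by rewrite -{1}f1; apply: hS; rewrite ler01 lexx.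
    by split => //; rewrite -f1 -e.
  have [d d0 hd] := seg_near o1 hU.
  pose t' := Num.min 1 (sg + d / 2).
  have At' : A t'.
    have d2 : 0 < d / 2 by apply: divr_gt0 => //; lra.
    split.
      rewrite ge_min lexx /= le_min ler01 /=; lra.
    move=> s /andP [s0 st].
    case: (ltP s sg) => hs.
      have [t [[_ ht] st2]] := below s hs; apply: ht; rewrite s0 /=; exact: ltW.
    apply: hd.
    have : t' <= sg + d / 2 by rewrite ge_min lexx orbT.
    rewrite ger0_norm; last by lra.
    lra.
  have := hs1 _ At'.
  rewrite /t' ge_min => /orP [h|h]; clear -h sglt d0; lra.
- have sgpos : 0 < sg.
    rewrite lt_neqAle sg0 andbT; apply/eqP => e; apply: (dis a).
    split; first by rewrite -{1}f0; apply: hS; rewrite lexx ler01.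
    by split => //; rewrite -f0 e.
  have [d d0 hd] := seg_near o2 hU.
  have d2 : 0 < d / 2 by apply: divr_gt0 => //; clear -d0; lra.
  have hb : sg - d / 2 < sg by clear -d2; lra.
  have [t [[/andP [t0 t1] ht] st]] := below _ hb.
  have tsg : t <= sg by apply: hs1; split => //; rewrite t0 t1.
  apply: (dis (seg a b t)); split; first by apply: hS; rewrite t0 t1.
  split; first by apply: ht; rewrite t0 lexx.
  apply: hd; rewrite ler0_norm; clear -st tsg d2; lra.
Qed.

Lemma star_conn (S : 'rV[R]_n -> Prop) c : S c ->
  (forall x, S x -> forall t, 0 <= t <= 1 -> S (seg c x t)) -> connected_set S.
Proof.
move=> Sc star U1 U2 o1 o2 cov dis [a [Sa Ua]] [b [Sb Ub]].
case: (cov _ Sc) => hc.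
  exact: (segment_conn o1 o2 cov dis (star b Sb) hc Ub).
apply: (segment_conn (U1 := U2) (U2 := U1) o2 o1 _ _ (star a Sa) hc Ua).
  by move=> x /cov [h|h]; [right|left].
by move=> x [h1 [h2 h3]]; apply: (dis x).
Qed.

End Conn.

Section Cone.
Variable R : realFieldType.
Hypothesis hR : sup_complete R.
Variables n k l : nat.
Variable B : 'M[R]_n.
Hypothesis hB : pseudo_euclidean B k l.
Hypothesis hk : (2 <= k)%N.
Variable H : 'M[R]_n.
Hypothesis hH : positive_plane B H k.-1.

Local Notation bf := (bform B).
Let Bsym : B^T = B. Proof. by case: hB. Qed.
Local Notation bsym := (bform_sym Bsym).
Local Notation W := (perp B H).

Definition halfcone (e : 'rV[R]_n) (s : R) :=
  fun w => lightcone B W w /\ 0 < s * bf w e.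

Lemma halfcone_conn e s : (e <= W)%MS -> 0 < bf e e -> s * s = 1 ->
  connected_set (halfcone e s).
Proof.
move=> hw ee ss.
have s0 : s != 0.
  by apply/eqP => h; move: ss; rewrite h mulr0 => /eqP; rewrite eq_sym oner_eq0.
apply: (star_conn hR (c := s *: e)).
  split; last by rewrite bformZl mulrA ss mul1r.
  split; first exact: scalemx_sub.
  split; first by rewrite bformZl bformZr mulrA ss mul1r ltW.
  by rewrite scaler_eq0 negb_or s0 /=; apply: contraTneq ee => ->; rewrite bform0l ltxx.
move=> x [[xW [xx x0]] xe] t /andP [t0 t1].
have hpos : 0 < s * bf (seg (s *: e) x t) e.
  rewrite /seg bformDl !bformZl.
  have -> : s * ((1 - t) * (s * bf e e) + t * bf x e) =
    (1 - t) * ((s * s) * bf e e) + t * (s * bf x e) by ring.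
  rewrite ss mul1r.
  case: (ltP t 1) => ht.
    apply: ltr_pwDl; first by apply: mulr_gt0 => //; lra.
    by apply: mulr_ge0 => //; apply: ltW.
  have -> : t = 1 by apply/eqP; rewrite eq_le t1 ht.
  by rewrite subrr mul0r add0r mul1r.
split => //; split.
  by rewrite /seg; apply: addmx_sub; apply: scalemx_sub => //; apply: scalemx_sub.
split.
  rewrite /seg !bformDl !bformDr !bformZl !bformZr (bsym x e).
  have h1 : 0 <= s * bf e x by rewrite (bsym e x) ltW.
  have h2 : 0 <= (1 - t) * t by apply: mulr_ge0; lra.
  have -> : (1 - t) * (s * ((1 - t) * (s * bf e e))) + (1 - t) * (s * (t * bf e x)) +
    (t * ((1 - t) * (s * bf e x)) + t * (t * bf x x)) =
     (1 - t) * (1 - t) * ((s * s) * bf e e) + 2 * ((1 - t) * t) * (s * bf e x) + t * t * bf x x.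
    ring.
  rewrite ss mul1r.
  have h3 : 0 <= (1 - t) * (1 - t) * bf e e by apply: mulr_ge0; [apply: mulr_ge0; lra | exact: ltW].
  have h4 : 0 <= t * t * bf x x by apply: mulr_ge0 => //; apply: mulr_ge0.
  have h5 : 0 <= 2 * ((1 - t) * t) * (s * bf e x) by apply: mulr_ge0 => //; apply: mulr_ge0.
  lra.
by apply: contraTneq hpos => ->; rewrite bform0l mulr0 ltxx.
Qed.

Lemma cone_ne0 e w : (e <= W)%MS -> 0 < bf e e -> lightcone B W w -> bf w e != 0.
Proof.
move=> eW ee [wW [ww w0]]; apply/eqP => h.
by apply: (orth_cone_false hB hk hH eW wW ee _ ww w0); rewrite bsym.
Qed.

Lemma comp_pm (C : 'rV[R]_n -> Prop) : connected_component (lightcone B W) C ->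
  forall w, lightcone B W w -> C w \/ C (- w).
Proof.
case=> [[x Cx] [CS [Cconn Cmax]]].
have [xW [xx x0]] := CS x Cx.
have [e [eW ee]] := pos_in_W hB hH xW x0 xx.
pose s : R := if 0 < bf x e then 1 else -1.
have ss : s * s = 1 by rewrite /s; case: ifP => _; rewrite ?mulr1 ?mulrNN ?mulr1.
have sx : 0 < s * bf x e.
  have := cone_ne0 eW ee (CS x Cx); rewrite /s; case: ifP => h; rewrite ?mul1r //.
  by rewrite mulN1r oppr_gt0 lt_neqAle => ->; rewrite leNgt h.
have sub : forall y, halfcone e s y -> C y.
  move=> y hy; apply: (Cmax (halfcone e s)) => //.
  - exact: halfcone_conn.
  - by move=> z [].
  - by exists x; split => //; split => //; exact: CS.
move=> w hw.
have we := cone_ne0 eW ee hw.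
case: (ltrgtP 0 (s * bf w e)) => h.
- by left; apply: sub.
- right; apply: sub; case: hw => [wW [ww w0]]; split.
    split; first by rewrite eqmx_opp.
    by rewrite bformNl bformNr opprK oppr_eq0.
  by rewrite bformNl mulrN oppr_gt0.
- exfalso; move: h => /esym /eqP; rewrite mulf_eq0 (negbTE we) orbF => /eqP s0.
  by move: ss; rewrite s0 mulr0 => /eqP; rewrite eq_sym oner_eq0.
Qed.

End Cone.

Section Final.
Variable R : realFieldType.
Variables n k l : nat.
Variable B : 'M[R]_n.
Hypothesis hB : pseudo_euclidean B k l.
Hypothesis hk : (2 <= k)%N.
Variable H : 'M[R]_n.
Hypothesis hH : positive_plane B H k.-1.

Local Notation bf := (bform B).
Let Bsym : B^T = B. Proof. by case: hB. Qed.
Let Bu : B \in unitmx. Proof. by case: hB => _ []. Qed.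
Local Notation bsym := (bform_sym Bsym).
Local Notation W := (perp B H).

Lemma surj (Z : 'M[R]_n) w : (w <= W)%MS -> (w <= perp B (Z :&: W))%MS ->
  exists v, (v <= perp B Z)%MS /\ piW B H v = w.
Proof.
move=> wW wM.
set K := H *m B *m Z^T.
set y := w *m B *m Z^T.
have yK : (y <= K)%MS.
  rewrite submxE; set X := cokermx K.
  have KX : K *m X = 0 by apply: mulmx_coker.
  set Y := X^T *m Z.
  have YW : (Y <= W)%MS.
    rewrite /perp sub_kermx; apply/eqP.
    have -> : Y *m (B *m H^T) = (K *m X)^T.
      by rewrite /Y /K !trmx_mul trmxK Bsym !mulmxA.
    by rewrite KX trmx0.
  have YM : (Y <= Z :&: W)%MS by rewrite sub_capmx submxMl YW.
  case/submxP: YM => D YD.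
  move: wM; rewrite /perp sub_kermx => /eqP wM.
  have -> : y *m X = w *m B *m Y^T by rewrite /y /Y trmx_mul trmxK !mulmxA.
  by rewrite YD trmx_mul -!mulmxA (mulmxA B) (mulmxA w) wM mul0mx.
case/submxP: yK => d yd.
exists (w - d *m H); split.
  rewrite /perp sub_kermx mulmxBl -!mulmxA (mulmxA w) -/y yd /K !mulmxA subrr //.
rewrite /piW mulmxBl (proj_mx_id (WH0 hH) wW).
by rewrite (proj_mx_0 (WH0 hH) (submxMl _ _)) subr0.
Qed.

Lemma semidef_orth m1 (M : 'M[R]_(m1, n)) u : (forall v, (v <= M)%MS -> bf v v <= 0) ->
  (u <= M)%MS -> bf u u = 0 -> (u <= perp B M)%MS.
Proof.
move=> nsd uM uu; apply/(perp_subP Bsym) => v vM.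
set b := bf u v; set c := bf v v.
have c0 : c <= 0 by apply: nsd.
set t := b / (1 - c).
have tc : t * (1 - c) = b by rewrite /t mulfVK //; apply: lt0r_neq0 => //; lra.
have hf : bf (u + t *: v) (u + t *: v) <= 0.
  apply: nsd; apply: addmx_sub => //; exact: scalemx_sub.
move: hf; rewrite !bformDl !bformDr !bformZl !bformZr uu -/c (bsym v u) -/b add0r.
move=> hf.
have e : b * b * (2 - c) = (1 - c) * (1 - c) * (t * b + (t * b + t * (t * c))).
  by rewrite -tc; ring.
have h1 : b * b * (2 - c) <= 0.
  rewrite e; apply: mulr_ge0_le0 => //; apply: mulr_ge0; lra.
have h2 : b * b = 0 by nra.
by move: h2 => /eqP; rewrite mulf_eq0 orbb => /eqP.
Qed.

Lemma exist_w (M : 'M[R]_n) e : (M <= W)%MS -> (forall v, (v <= M)%MS -> bf v v <= 0) ->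
  (e <= W)%MS -> 0 < bf e e ->
  exists w, [/\ (w <= W)%MS, (w <= perp B M)%MS, 0 <= bf w w & w != 0].
Proof.
move=> MW nsd eW ee.
case: (classic (exists u, [/\ (u <= M)%MS, u != 0 & bf u u = 0])).
  case=> u [uM u0 uu]; exists u; split => //.
  - exact: submx_trans uM MW.
  - exact: semidef_orth.
  - by rewrite uu.
move=> hnd.
have nd : forall u, (u <= M)%MS -> u != 0 -> bf u u < 0.
  move=> u uM u0; rewrite lt_neqAle nsd // andbT; apply/eqP => h; apply: hnd; by exists u.
set A := row_base M.
have AM : (A :=: M)%MS := eq_row_base M.
set G := A *m B *m A^T.
have Gu : G \in unitmx.
  rewrite -row_free_unit -kermx_eq0; apply/rowV0P => x; rewrite sub_kermx => /eqP xG.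
  have hx : bf (x *m A) (x *m A) = 0.
    rewrite /bform; have -> : x *m A *m B *m (x *m A)^T = x *m G *m x^T by rewrite /G trmx_mul !mulmxA.
    by rewrite xG mul0mx mxE.
  have : x *m A = 0.
    apply/eqP; apply: contraT => h.
    have xAM : (x *m A <= M)%MS by rewrite -AM submxMl.
    by have := nd _ xAM h; rewrite hx ltxx.
  by move=> h; apply: (row_free_inj (row_base_free M)); rewrite h mul0mx.
set c := e *m B *m A^T *m invmx G.
set u := c *m A.
have uM : (u <= M)%MS by rewrite -AM submxMl.
set w := e - u.
have wA : (w <= perp B A)%MS.
  rewrite /perp sub_kermx /w mulmxBl.
  have -> : u *m (B *m A^T) = c *m G by rewrite /u /G !mulmxA.
  have -> : c *m G = e *m (B *m A^T) by rewrite /c mulmxKV // !mulmxA.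
  by rewrite subrr.
have wM : (w <= perp B M)%MS.
  apply/(perp_subP Bsym) => v vM; apply: bform_sub_perp wA _; by rewrite AM.
have wu : bf w u = 0 by apply: bform_sub_perp wM uM.
have uu := nsd _ uM.
have ww : bf w w = bf e e - bf u u.
  move: wu; rewrite /w !bformBl !bformBr => wu.
  rewrite (bsym u e); move/eqP: wu; rewrite subr_eq0 => /eqP ->; ring.
have wpos : 0 < bf w w by rewrite ww; lra.
exists w; split.
- by apply: addmx_sub => //; rewrite eqmx_opp; exact: submx_trans uM MW.
- exact: wM.
- exact: ltW.
- by apply: contraTneq wpos => ->; rewrite bform0l ltxx.
Qed.

End Final.

Unset Implicit Arguments. Set Strict Implicit. Set Printing Implicit Defensive.

Theorem lemma3 (R : realFieldType) (hR : sup_complete R)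
  (n k l : nat) (B : 'M[R]_n) (hB : pseudo_euclidean B k l)
  (hk : (2 <= k)%N) (hl : (2 <= l)%N)
  (Z H : 'M[R]_n) (hZ : qplus_ge1 B Z)
  (hH : positive_plane B H k.-1)
  (C : 'rV[R]_n -> Prop) (hC : connected_component (lightcone B (perp B H)) C) :
  (orth_extendable B k Z H <-> qplus_ge1 B (Z :&: perp B H)%MS) /\
  (qplus_ge1 B (Z :&: perp B H)%MS <->
     (forall v : 'rV[R]_n, (v <= perp B Z)%MS -> ~ C (v *m proj_mx (perp B H) H))).
Proof.
have Bsym : B^T = B by case: hB.
have MW : (Z :&: perp B H <= perp B H)%MS by apply: capmxSr.
have MZ : (Z :&: perp B H <= Z)%MS by apply: capmxSl.
have Hpd := Hpd hH.
have plus_pos : forall z, (z <= Z :&: perp B H)%MS -> 0 < bform B z z ->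
    posdef B (H + z)%MS /\ \rank (H + z)%MS = k.
  move=> z hz zz.
  have [pd rk] := posdef_orth_sum Bsym Hpd (posdef_rV zz)
    (fun x y hx hy => perp_sym Bsym hx (submx_trans hy (submx_trans hz MW))).
  split => //; rewrite rk rank_rV (proj1 hH).
  have -> : (z != 0) = true.
    by apply/negP => /eqP z0; move: zz; rewrite z0 bform0l ltxx.
  by move: hk; clear; lia.
split; split.
- case=> z [hz [rk pd]].
  have z0 : z != 0.
    apply/eqP => z0; move: rk; rewrite z0 => rk.
    have : \rank H = k by rewrite -rk addsmx0.
    by rewrite (proj1 hH); move: hk; clear; lia.
  apply: (qplus_of_pos hR Bsym hz).
  by apply: pd => //; apply: addsmxSr.
- move/(pos_of_qplus) => [z [hz zz]].
  have [pd rk] := plus_pos z hz zz.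
  by exists z; split => //; split.
- move/(pos_of_qplus) => [z [hz zz]] v hv Cv.
  have [[wW [ww w0]]] := (proj1 (proj2 hC)) _ Cv.
  move: wW ww w0; rewrite -/(piW B H v) => wW ww w0.
  apply: (orth_cone_false hB hk hH (submx_trans hz MW) wW zz _ ww w0).
  have e1 : bform B z v = 0 by exact: (perp_sym Bsym (submx_trans hz MZ) hv).
  have e2 : bform B z (v - piW B H v) = 0.
    by apply: bform_sub_perp (submx_trans hz MW) (piW_compl hB hH v).
  by move: e2; rewrite bformBr e1 sub0r => /eqP; rewrite oppr_eq0 => /eqP.
- move=> h3; apply: NNPP => hn.
  have nsd : forall v, (v <= Z :&: perp B H)%MS -> bform B v v <= 0.
    move=> v hv; rewrite leNgt; apply/negP => hvv; apply: hn.
    exact: (qplus_of_pos hR Bsym hv hvv).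
  case: (hC) => [[x Cx] [CS _]].
  have [xW [xx x0]] := CS x Cx.
  have [e [eW ee]] := pos_in_W hB hH xW x0 xx.
  have [w [wW wM ww w0]] := exist_w hB MW nsd eW ee.
  have lw : lightcone B (perp B H) w by [].
  have hu : exists u, [/\ (u <= perp B H)%MS, (u <= perp B (Z :&: perp B H))%MS & C u].
    case: (comp_pm hR hB hk hH hC lw) => Cw.
      by exists w; split.
    by exists (- w); split => //; rewrite eqmx_opp.
  case: hu => u [uW uM Cu].
  have [v [hv pv]] := surj hB hH uW uM.
  by apply: (h3 v hv); rewrite -/(piW B H v) pv.
Qed.
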